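(* Let $X$ and $Y$ be bounded degree graphs with $X$ amenable, and let $f\colon X\to Y$ be a quasi-isometry. If $f$ is both quasi-$k$-to-one and quasi-$k'$-to-one for some $k,k'>0$, then $k=k'$.
   Context: Graphs carry their path metric. For $A\subset Y$, $\partial_Y A$ is the set of vertices of $Y\setminus A$ adjacent to some vertex of $A$. For $k>0$, a quasi-isometry $f\colon X\to Y$ is quasi-$k$-to-one if there is $C>0$ with $\bigl|k|A|-|f^{-1}(A)|\bigr|\le C|\partial_Y A|$ for every finite $A\subset Y$. A bounded degree graph is amenable if it admits a Følner sequence, i.e. finite sets $F_n$ with $|\partial F_n|/|F_n|\to0$. *)

(* Defs.v *)
From Stdlib Require Import Reals Lra List.
Import ListNotations.
Open Scope R_scope.

Section Graphs.
Context {T : Type} (adj : T -> T -> Prop).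

Inductive walk : T -> T -> nat -> Prop :=
| walk0 x : walk x x 0
| walkS x y z n : adj x y -> walk y z n -> walk x z (S n).

Definition is_dist (x y : T) (n : nat) : Prop :=
  walk x y n /\ forall m, walk x y m -> (n <= m)%nat.

(* a (connected, simple) graph, so that the path metric is a genuine metric *)
Definition is_graph : Prop :=
  (forall x y, adj x y -> adj y x) /\ (forall x, ~ adj x x) /\
  (forall x y, exists n, walk x y n).

Definition bounded_degree : Prop :=
  exists D : nat, forall x, exists l : list T,
    (length l <= D)%nat /\ forall y, adj x y -> In y l.

Definition has_card (P : T -> Prop) (n : nat) : Prop :=
  exists l : list T, NoDup l /\ length l = n /\ forall x, In x l <-> P x.

Definition vboundary (A : list T) : T -> Prop :=
  fun y => ~ In y A /\ exists a, In a A /\ adj a y.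

Definition amenable : Prop :=
  exists (F : nat -> list T) (b : nat -> nat),
    (forall n, NoDup (F n) /\ F n <> []) /\
    (forall n, has_card (vboundary (F n)) (b n)) /\
    Un_cv (fun n => INR (b n) / INR (length (F n))) 0.
End Graphs.

Definition quasi_isometry {X Y : Type} (adjX : X -> X -> Prop)
  (adjY : Y -> Y -> Prop) (f : X -> Y) : Prop :=
  exists K C : R, 1 <= K /\ 0 <= C /\
    (forall x x' n m, is_dist adjX x x' n -> is_dist adjY (f x) (f x') m ->
       INR n / K - C <= INR m /\ INR m <= K * INR n + C) /\
    (forall y, exists x n, is_dist adjY (f x) y n /\ INR n <= C).

Definition quasi_k_to_one {X Y : Type} (adjX : X -> X -> Prop)
  (adjY : Y -> Y -> Prop) (f : X -> Y) (k : R) : Prop :=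
  exists C : R, 0 < C /\
    forall (A : list Y) (m b : nat), NoDup A ->
      has_card (fun x => In (f x) A) m ->
      has_card (vboundary adjY A) b ->
      Rabs (k * INR (length A) - INR m) <= C * INR b.

(* Main.v *)
Require Import Defs.
From Stdlib Require Import Reals.
From Stdlib Require Import Lra Lia List Classical Wf_nat Compare_dec.
Import ListNotations.
Open Scope R_scope.

Lemma real_to_nat (r : R) : exists N : nat, r <= INR N.
Proof. destruct (INR_unbounded r) as [n Hn]. exists n. lra. Qed.

Lemma walk_app {T} (adj : T -> T -> Prop) x y z n m :
  walk adj x y n -> walk adj y z m -> walk adj x z (n + m).
Proof.
  induction 1; intros Hw; simpl; auto.
  econstructor; eauto.
Qed.

Lemma walk_snoc {T} (adj : T -> T -> Prop) x y z n :
  walk adj x y n -> adj y z -> walk adj x z (S n).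
Proof.
  intros H1 H2. replace (S n) with (n + 1)%nat by lia.
  eapply walk_app; eauto. econstructor; eauto. constructor.
Qed.

Lemma walk_sym {T} (adj : T -> T -> Prop) :
  (forall x y, adj x y -> adj y x) ->
  forall x y n, walk adj x y n -> walk adj y x n.
Proof.
  intros Hs x y n H; induction H. constructor.
  eapply walk_snoc; eauto.
Qed.

Definition near {T} (adj : T -> T -> Prop) x y r :=
  exists n, (n <= r)%nat /\ walk adj x y n.

Lemma near_trans {T} (adj : T -> T -> Prop) x y z r s :
  near adj x y r -> near adj y z s -> near adj x z (r + s).
Proof.
  intros [n [Hn Hw]] [m [Hm Hw']]. exists (n + m)%nat. split; [lia|].
  eapply walk_app; eauto.
Qed.

Lemma near_sym {T} (adj : T -> T -> Prop) :
  (forall x y, adj x y -> adj y x) ->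
  forall x y r, near adj x y r -> near adj y x r.
Proof. intros Hs x y r [n [Hn Hw]]. exists n. split; auto. eapply walk_sym; eauto. Qed.

Lemma min_nat (P : nat -> Prop) n : P n -> exists m, P m /\ forall k, P k -> (m <= k)%nat.
Proof.
  induction n as [n IH] using (well_founded_induction lt_wf). intros Hn.
  destruct (classic (exists k, P k /\ (k < n)%nat)) as [[k [Hk Hlt]]|Hno].
  - apply (IH k Hlt Hk).
  - exists n. split; auto. intros k Hk. destruct (le_lt_dec n k); auto.
    exfalso; apply Hno; eauto.
Qed.

Lemma dist_exists {T} {adj : T -> T -> Prop} x y n :
  walk adj x y n -> exists d, is_dist adj x y d /\ (d <= n)%nat.
Proof.
  intros H. destruct (min_nat (walk adj x y) n H) as [d [Hd Hmin]].
  exists d. split; [split; auto| auto].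
Qed.

Lemma union_bound {A B} (l : list A) (Q : A -> B -> Prop) (beta : nat) :
  (forall a, In a l -> exists lb, (length lb <= beta)%nat /\ forall y, Q a y -> In y lb) ->
  exists L, (length L <= beta * length l)%nat /\ forall a y, In a l -> Q a y -> In y L.
Proof.
  induction l as [|a l IH]; intros H.
  - exists []. split; [simpl; lia|]. intros a y [].
  - destruct IH as [L [HL HinL]]. { intros b Hb; apply H; simpl; auto. }
    destruct (H a) as [lb [Hlb Hinb]]; [simpl; auto|].
    exists (lb ++ L). split.
    + rewrite length_app. simpl. nia.
    + intros a' y [<-|Ha'] Hq; apply in_or_app; [left|right]; eauto.
Qed.

Lemma finite_card {T} (l : list T) : forall P : T -> Prop,
  (forall x, P x -> In x l) -> exists n, has_card P n /\ (n <= length l)%nat.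
Proof.
  induction l as [|a l IHl]; intros P HP.
  - exists 0%nat. split; [|simpl; lia]. exists []. split; [constructor|]. split; [reflexivity|].
    intros x; split; [intros []| intros Hx; apply (HP x Hx)].
  - destruct (IHl (fun x => P x /\ x <> a)) as [n [[l' [Hnd [Hlen Hiff]]] Hle]].
    { intros x [Hx Hne]. destruct (HP x Hx) as [->|]; [congruence|auto]. }
    destruct (classic (P a)) as [Pa|nPa].
    + exists (S n). split; [|simpl; lia]. exists (a :: l'). split.
      { constructor; [intros Hin; apply Hiff in Hin; tauto | auto]. }
      split; [simpl; lia|]. intros x; simpl; split.
      * intros [<-|Hin]; [auto| apply Hiff in Hin; tauto].
      * intros Px. destruct (classic (x = a)) as [->|Hne]; [left; auto | right; apply Hiff; auto].
    + exists n. split; [|simpl; lia]. exists l'. split; auto. split; auto.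
      intros x; split; [intros Hin; apply Hiff in Hin; tauto|].
      intros Px; apply Hiff; split; auto; intros ->; auto.
Qed.

Lemma ball_bound {T} (adj : T -> T -> Prop) : bounded_degree adj ->
  forall r, exists B, forall x, exists l, (length l <= B)%nat /\
    forall y, near adj x y r -> In y l.
Proof.
  intros [D HD] r. induction r as [|r [B HB]].
  - exists 1%nat. intros x. exists [x]. split; [simpl; lia|].
    intros y [n [Hn Hw]]. assert (n = 0%nat) by lia. subst. inversion Hw; subst. simpl; auto.
  - exists (B * S D)%nat. intros x. destruct (HD x) as [N [HN HinN]].
    destruct (union_bound (x :: N) (fun w y => near adj w y r) B) as [L [HL HinL]].
    { intros a _. apply HB. }
    exists L. split; [simpl in HL; nia|].
    intros y [n [Hn Hw]]. inversion Hw; subst.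
    + apply (HinL y); [simpl; auto|]. exists 0%nat. split; [lia|constructor].
    + apply (HinL y0); [simpl; right; auto|]. exists n0. split; [lia|auto].
Qed.

Lemma boundary_exit {T} (adj : T -> T -> Prop) (F : list T) u v n :
  walk adj u v n -> In u F -> ~ In v F ->
  exists z, vboundary adj F z /\ near adj z v n.
Proof.
  induction 1 as [x|x y z n Hxy Hw IH]; intros Hu Hv.
  - contradiction.
  - destruct (classic (In y F)) as [Hy|Hy].
    + destruct (IH Hy Hv) as [w [Hw1 [j [Hj Hwj]]]]. exists w. split; auto. exists j. split; [lia|auto].
    + exists y. split. { split; auto. exists x. split; auto. } exists n. split; [lia|auto].
Qed.

Lemma no_gt (X Y : Type) (adjX : X -> X -> Prop) (adjY : Y -> Y -> Prop)
  (f : X -> Y) (k k' : R) :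
  is_graph adjX -> is_graph adjY ->
  bounded_degree adjX -> bounded_degree adjY ->
  amenable adjX ->
  quasi_isometry adjX adjY f ->
  0 < k -> 0 < k' ->
  quasi_k_to_one adjX adjY f k -> quasi_k_to_one adjX adjY f k' ->
  ~ (k' < k).
Proof.
  intros [symX [_ conX]] [symY [_ conY]] bdX bdY [F [b [HF [Hb Hcv]]]]
    [K [C [HK [HC [Hqi Hden]]]]] hk hk' [C1 [HC1 Hq1]] [C2 [HC2 Hq2]] Hlt.
  assert (qi_up : forall x x' n N, walk adjX x x' n -> K * INR n + C <= INR N ->
            near adjY (f x) (f x') N).
  { intros x x' n N Hw HN. destruct (dist_exists _ _ _ Hw) as [n0 [Hd0 Hn0]].
    destruct (conY (f x) (f x')) as [m Hm]. destruct (dist_exists _ _ _ Hm) as [m0 [Hdm _]].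
    destruct (Hqi _ _ _ _ Hd0 Hdm) as [_ Hup]. exists m0. split; [|apply Hdm].
    apply INR_le. apply le_INR in Hn0. nra. }
  assert (qi_down : forall x x' m N, walk adjY (f x) (f x') m -> K * (INR m + C) <= INR N ->
            near adjX x x' N).
  { intros x x' m N Hw HN. destruct (dist_exists _ _ _ Hw) as [m0 [Hdm Hm0]].
    destruct (conX x x') as [n Hn]. destruct (dist_exists _ _ _ Hn) as [n0 [Hdn _]].
    destruct (Hqi _ _ _ _ Hdn Hdm) as [Hlo _]. exists n0; split; [|apply Hdn].
    apply INR_le. apply le_INR in Hm0.
    assert (INR n0 / K <= INR m + C) by lra.
    assert (INR n0 = K * (INR n0 / K)) by (field; lra). nra. }
  destruct (real_to_nat C) as [R HR].
  assert (dense : forall y, exists x, near adjY (f x) y R).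
  { intros y. destruct (Hden y) as [x [n [Hd Hn]]]. exists x, n.
    split; [apply INR_le; lra | apply Hd]. }
  destruct (real_to_nat (K * (INR R + C))) as [N2 HN2].
  destruct (real_to_nat (K * (INR (R + 1 + R) + C))) as [N3 HN3].
  destruct (real_to_nat (K * INR N3 + C)) as [N4 HN4].
  destruct (ball_bound adjY bdY R) as [BR HBR].
  destruct (ball_bound adjX bdX N2) as [B2 HB2].
  destruct (ball_bound adjY bdY (N4 + R)) as [B4 HB4].
  set (M := (k * (C1 + C2) + (k - k') * C1) * INR B4).
  assert (key : forall n, (k - k') * INR (length (F n)) <= M * INR (b n)).
  { intros n. destruct (HF n) as [Fnd Fne]. destruct (Hb n) as [Bl [Bnd [Blen Biff]]].
    set (Fn := F n) in *.
    set (A := fun y => exists a, In a Fn /\ near adjY (f a) y R).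
    destruct (union_bound Fn (fun a y => near adjY (f a) y R) BR) as [LA [_ HLA]].
    { intros a _. apply HBR. }
    destruct (finite_card LA A) as [na [[lA [lAnd [lAlen lAiff]]] _]].
    { intros y [a [Ha Hy]]. eapply HLA; eauto. }
    destruct (union_bound Fn (fun a x => near adjX a x N2) B2) as [LP [_ HLP]].
    { intros a _. apply HB2. }
    destruct (finite_card LP (fun x => In (f x) lA)) as [m [Hm _]].
    { intros x Hx. apply lAiff in Hx. destruct Hx as [a [Ha [j [Hj Hw]]]].
      eapply HLP; [exact Ha|]. apply (qi_down a x j N2 Hw). apply le_INR in Hj. nra. }
    assert (HFm : (length Fn <= m)%nat).
    { destruct Hm as [lm [lmnd [lmlen lmiff]]]. rewrite <- lmlen.
      apply NoDup_incl_length; auto. intros a Ha. apply lmiff. apply lAiff.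
      exists a. split; auto. exists 0%nat. split; [lia| constructor]. }
    destruct (union_bound Bl (fun z y => near adjY (f z) y (N4 + R)) B4) as [LB [LBlen HLB]].
    { intros z _. apply HB4. }
    destruct (finite_card LB (vboundary adjY lA)) as [bA [HbA HbAle]].
    { intros y [Hny [a' [Ha' Hadj]]]. apply lAiff in Ha'. destruct Ha' as [a [Ha Hna']].
      destruct (dense y) as [x' Hx'].
      assert (Hx'F : ~ In x' Fn). { intros Hin. apply Hny. apply lAiff. exists x'. auto. }
      assert (H1 : near adjY (f a) (f x') (R + 1 + R)).
      { eapply near_trans; [eapply near_trans; [exact Hna'|]|].
        - exists 1%nat. split; [lia|]. econstructor; [exact Hadj| constructor].
        - apply near_sym; auto. }
      destruct H1 as [j [Hj Hw]].
      assert (H2 : near adjX a x' N3).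
      { apply (qi_down a x' j N3 Hw). apply le_INR in Hj. nra. }
      destruct H2 as [i [Hi Hwi]].
      destruct (boundary_exit adjX Fn a x' i Hwi Ha Hx'F) as [z [Hz [i' [Hi' Hwz]]]].
      assert (H3 : near adjY (f z) (f x') N4).
      { apply (qi_up z x' i' N4 Hwz). apply le_INR in Hi', Hi. nra. }
      eapply HLB. apply Biff; exact Hz. eapply near_trans; [exact H3| exact Hx']. }
    pose proof (Hq1 lA m bA lAnd Hm HbA) as E1.
    pose proof (Hq2 lA m bA lAnd Hm HbA) as E2.
    rewrite lAlen in E1, E2.
    apply le_INR in HFm.
    assert (HbB : INR bA <= INR B4 * INR (b n)).
    { rewrite <- mult_INR. apply le_INR. rewrite <- Blen. lia. }
    pose proof (Rle_abs (k * INR na - INR m)).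
    pose proof (Rle_abs (-(k * INR na - INR m))). rewrite Rabs_Ropp in *.
    pose proof (Rle_abs (-(k' * INR na - INR m))). rewrite Rabs_Ropp in *.
    pose proof (pos_INR na). pose proof (pos_INR bA).
    assert (E3 : (k - k') * INR (length Fn) <= (k - k') * (k * INR na + C1 * INR bA))
      by (apply Rmult_le_compat_l; lra).
    assert (E4 : k * ((k - k') * INR na) <= k * ((C1 + C2) * INR bA))
      by (apply Rmult_le_compat_l; lra).
    assert (E5 : (k * (C1 + C2) + (k - k') * C1) * INR bA <=
                 (k * (C1 + C2) + (k - k') * C1) * (INR B4 * INR (b n)))
      by (apply Rmult_le_compat_l; [nra|lra]).
    unfold M. lra. }
  assert (Hd : 0 < k - k') by lra.
  assert (HM : 0 <= M) by (unfold M; apply Rmult_le_pos; [nra| apply pos_INR]).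
  destruct (Hcv ((k - k') / (M + 1))) as [N HN]. { apply Rdiv_lt_0_compat; lra. }
  specialize (HN N (Nat.le_refl N)). unfold R_dist in HN. rewrite Rminus_0_r in HN.
  apply Rabs_def2 in HN. destruct HN as [HN _].
  assert (HL : 0 < INR (length (F N))).
  { destruct (HF N) as [_ Hne]. destruct (F N); [congruence|]. simpl length. rewrite S_INR.
    pose proof (pos_INR (length l)). lra. }
  pose proof (key N) as HkN.
  set (u := INR (b N) / INR (length (F N))) in *.
  assert (Hu : k - k' <= M * u).
  { apply Rmult_le_reg_r with (INR (length (F N))); [lra|].
    unfold u. replace (M * (INR (b N) / INR (length (F N))) * INR (length (F N)))
      with (M * INR (b N)) by (field; lra). exact HkN. }
  assert (M * u <= M * ((k - k') / (M + 1))) by (apply Rmult_le_compat_l; lra).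
  assert (M * ((k - k') / (M + 1)) = (k - k') - (k - k') / (M + 1)) by (field; lra).
  assert (0 < (k - k') / (M + 1)) by (apply Rdiv_lt_0_compat; lra).
  lra.
Qed.

Theorem lemma2p9 (X Y : Type) (adjX : X -> X -> Prop) (adjY : Y -> Y -> Prop)
  (f : X -> Y) (k k' : R) :
  is_graph adjX -> is_graph adjY ->
  bounded_degree adjX -> bounded_degree adjY ->
  amenable adjX ->
  quasi_isometry adjX adjY f ->
  0 < k -> 0 < k' ->
  quasi_k_to_one adjX adjY f k -> quasi_k_to_one adjX adjY f k' ->
  k = k'.
Proof.
  intros H1 H2 H3 H4 H5 H6 H7 H8 H9 H10.
  destruct (Rtotal_order k k') as [Hl|[He|Hg]]; auto; exfalso.
  - eapply (no_gt X Y adjX adjY f k' k); eauto.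
  - eapply (no_gt X Y adjX adjY f k k'); eauto.
Qed.
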